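(* Let $((A_i,B_i))_{i\in\mathbb N}$ be an increasing sequence of oriented separations of a locally finite graph $G$ whose underlying separations are tight, and let $(A,B)=(\bigcup_iA_i,\bigcap_iB_i)$. If $B\neq\emptyset$, then every $v\in A\cap B$ has a neighbour $w\in B\setminus A$ such that for infinitely many $i\in\mathbb N$ the vertex $w$ lies in a tight component $K_i$ of $G-(A_i\cap B_i)$ with $V(K_i)\subseteq B_i\setminus A_i$. In particular, $N_G(B\setminus A)=A\cap B$.
   Context: A separation of $G$ is an unordered pair $\{A,B\}$ of subsets of $V(G)$ with $A\cup B=V(G)$ and no edge between $A\setminus B$ and $B\setminus A$; oriented separations are ordered by $(A,B)\le(C,D)$ iff $A\subseteq C$ and $B\supseteq D$. For $X\subseteq V(G)$, a component $K$ of $G-X$ is tight if $N_G(K)=X$. A separation $\{A,B\}$ is tight if both $A\setminus B$ and $B\setminus A$ contain the vertex set of a tight component of $G-(A\cap B)$. *)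

(* Defs.v *)
From Stdlib Require Import List Relations.

Record graph (V : Type) := Graph {
  adj : V -> V -> Prop;
  adj_sym : forall u v, adj u v -> adj v u;
  adj_irrefl : forall v, ~ adj v v
}.
Arguments adj {V} g u v.

Definition vset (V : Type) := V -> Prop.

Definition locally_finite {V} (G : graph V) : Prop :=
  forall v, exists l : list V, forall w, adj G v w -> In w l.

(* a separation (as an ordered pair; its underlying unordered separation is
   {A,B}): A ∪ B = V(G) and no edge between A\B and B\A *)
Definition is_separation {V} (G : graph V) (A B : vset V) : Prop :=
  (forall v, A v \/ B v) /\
  (forall u w, A u -> ~ B u -> B w -> ~ A w -> ~ adj G u w).

Definition sep_le {V} (A B C D : vset V) : Prop :=
  (forall v, A v -> C v) /\ (forall v, D v -> B v).

Definition adj_minus {V} (G : graph V) (X : vset V) : relation V :=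
  fun u w => adj G u w /\ ~ X u /\ ~ X w.

Definition is_component {V} (G : graph V) (X K : vset V) : Prop :=
  (exists v, K v) /\
  (forall v, K v -> ~ X v) /\
  (forall u w, K u -> K w -> clos_refl_trans V (adj_minus G X) u w) /\
  (forall u w, K u -> adj G u w -> ~ X w -> K w).

Definition nbhd {V} (G : graph V) (S : vset V) : vset V :=
  fun x => ~ S x /\ exists y, S y /\ adj G x y.

Definition tight_component {V} (G : graph V) (X K : vset V) : Prop :=
  is_component G X K /\ (forall x, nbhd G K x <-> X x).

Definition sep_sides_inter {V} (A B : vset V) : vset V := fun x => A x /\ B x.

Definition tight_separation {V} (G : graph V) (A B : vset V) : Prop :=
  is_separation G A B /\
  (exists K, tight_component G (sep_sides_inter A B) K /\
             forall v, K v -> A v /\ ~ B v) /\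
  (exists K, tight_component G (sep_sides_inter A B) K /\
             forall v, K v -> B v /\ ~ A v).

(* Main.v *)
Require Import Defs.
From Stdlib Require Import List Relations Arith.
From Stdlib Require Import Classical Lia.

Lemma pigeon {V : Type} (l : list V) (P : nat -> V -> Prop) :
  (forall n, exists i, n <= i /\ exists w, In w l /\ P i w) ->
  exists w, In w l /\ forall n, exists i, n <= i /\ P i w.
Proof.
  induction l as [|a l IH]; intros H.
  - destruct (H 0) as [i [_ [w [[] _]]]].
  - destruct (classic (forall n, exists i, n <= i /\ P i a)) as [Ha|Ha].
    + exists a; split; [left; reflexivity|exact Ha].
    + apply not_all_ex_not in Ha as [n0 Hn0].
      destruct IH as [w [Hw Hw']].
      * intros n. destruct (H (max n n0)) as [i [Hi [w [Hw HP]]]].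
        exists i; split; [lia|]. exists w; split; [|exact HP].
        destruct Hw as [<-|Hw]; [|exact Hw].
        exfalso; apply Hn0; exists i; split; [lia|exact HP].
      * exists w; split; [right; exact Hw|exact Hw'].
Qed.

Theorem mainTheorem7 (V : Type) (G : graph V) (As Bs : nat -> vset V) :
  locally_finite G ->
  (forall i, tight_separation G (As i) (Bs i)) ->
  (forall i j, i <= j -> sep_le (As i) (Bs i) (As j) (Bs j)) ->
  let A : vset V := fun x => exists i, As i x in
  let B : vset V := fun x => forall i, Bs i x in
  (exists x, B x) ->
  (forall v, A v -> B v ->
     exists w, adj G v w /\ B w /\ ~ A w /\
       (forall n, exists i, n <= i /\
          exists K, tight_component G (sep_sides_inter (As i) (Bs i)) K /\
                    K w /\ (forall x, K x -> Bs i x /\ ~ As i x))) /\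
  (forall x, nbhd G (fun y => B y /\ ~ A y) x <-> (A x /\ B x)).
Proof.
  intros Hlf Hts Hmon A B _.
  assert (part1 : forall v, A v -> B v ->
     exists w, adj G v w /\ B w /\ ~ A w /\
       (forall n, exists i, n <= i /\
          exists K, tight_component G (sep_sides_inter (As i) (Bs i)) K /\
                    K w /\ (forall x, K x -> Bs i x /\ ~ As i x))).
  { intros v [i0 Hv0] HvB.
    destruct (Hlf v) as [l Hl].
    destruct (pigeon l (fun i w => adj G v w /\
          exists K, tight_component G (sep_sides_inter (As i) (Bs i)) K /\
                    K w /\ (forall x, K x -> Bs i x /\ ~ As i x))) as [w [_ Hw]].
    - intros n. exists (max n i0). split; [lia|].
      destruct (Hts (max n i0)) as [_ [_ [K [[HK HN] HKs]]]].
      assert (Hx : sep_sides_inter (As (max n i0)) (Bs (max n i0)) v).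
      { split; [apply (proj1 (Hmon i0 (max n i0) ltac:(lia))); exact Hv0| apply HvB]. }
      destruct (proj2 (HN v) Hx) as [_ [y [Ky Hy]]].
      exists y. split; [apply Hl; exact Hy|]. split; [exact Hy|].
      exists K; exact (conj (conj HK HN) (conj Ky HKs)).
    - destruct (Hw 0) as [i [_ [Hadj _]]].
      exists w. split; [exact Hadj|]. split; [|split].
      + intros j. destruct (Hw j) as [i' [Hi' [_ [K [_ [Kw HK]]]]]].
        apply (proj2 (Hmon j i' Hi')). apply (HK w Kw).
      + intros [j Hj]. destruct (Hw j) as [i' [Hi' [_ [K [_ [Kw HK]]]]]].
        apply (proj2 (HK w Kw)). apply (proj1 (Hmon j i' Hi')); exact Hj.
      + intros n. destruct (Hw n) as [i' [Hi' [_ HH]]]. exists i'; split; assumption. }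
  split; [exact part1|].
  intros x; split.
  - intros [Hnx [y [[HyB HyA] Hxy]]].
    assert (HxB : B x).
    { intros j. destruct (Hts j) as [[Hcov Hsep] _].
      apply NNPP; intro Hnb.
      destruct (Hcov x) as [Ha|Hb]; [|contradiction].
      apply (Hsep x y Ha Hnb (HyB j)); [intro Hya; apply HyA; exists j; exact Hya|exact Hxy]. }
    split; [|exact HxB].
    apply NNPP; intro HnA. apply Hnx; split; assumption.
  - intros [HxA HxB].
    destruct (part1 x HxA HxB) as [w [Hadj [HwB [HwA _]]]].
    split; [intros [_ H]; contradiction|].
    exists w; split; [split; assumption|exact Hadj].
Qed.
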